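(* For every integer $k\ge 0$, $$B_{k}=(-1)^{k+1}\sum_{n=1}^{k+1}\frac{1}{n^2}\Delta_{n}(k+1),\qquad\text{where}\quad \Delta_{n}(m)=\sum_{j=1}^{n}(-1)^{j}\binom{n}{j}j^{m}.$$
   Context: The Bernoulli numbers $B_k$ are defined by the generating function $\frac{t}{e^{t}-1}=\sum_{k=0}^{\infty}\frac{B_k}{k!}t^k$ for $|t|<2\pi$ (so $B_1=-1/2$). *)

(* Defs.v *)
From HB Require Import structures.
From mathcomp Require Import all_boot all_order all_algebra.
From mathcomp Require Import all_classical all_reals all_analysis.
Set Implicit Arguments. Unset Strict Implicit. Unset Printing Implicit Defensive.
Import Order.TTheory GRing.Theory Num.Theory.
Import numFieldNormedType.Exports.
Local Open Scope classical_set_scope.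
Local Open Scope ring_scope.

(* b is the sequence of Bernoulli numbers: for 0 < |t| < 2 pi,
   t / (e^t - 1) = \sum_{k>=0} b_k / k! t^k  (the series converges to it).
   (At t = 0 the left side is understood as its limit 1; the identity on the
   punctured disc already determines b uniquely.) *)
Definition bernoulli_gf (R : realType) (b : nat -> R) : Prop :=
  forall t : R, 0 < `|t| < 2 * pi ->
    (fun n : nat => \sum_(0 <= k < n) b k / (k`!)%:R * t ^+ k) @ \oo
      --> t / (expR t - 1).

Definition Delta (R : ringType) (n m : nat) : R :=
  \sum_(1 <= j < n.+1) (-1) ^+ j * ('C(n, j))%:R * (j%:R) ^+ m.

(* Main.v *)
Require Import Defs.
From HB Require Import structures.
From mathcomp Require Import all_boot all_order all_algebra.
From mathcomp Require Import all_classical all_reals all_analysis.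
From mathcomp Require Import ring lra zify.
From Stdlib Require Import Lia.
Import Order.TTheory GRing.Theory Num.Theory.
Import numFieldNormedType.Exports.
Local Open Scope classical_set_scope.
Local Open Scope ring_scope.
Section PartA.
Variable R : numFieldType.

Lemma bump0 i : bump 0 i = i.+1. Proof. by []. Qed.

Definition E (n m : nat) : R :=
  \sum_(j < n.+1) (-1) ^+ j * ('C(n, j))%:R * (- (j%:R)) ^+ m.

Definition P (n m : nat) : R :=
  \sum_(i < n.+1) (-1) ^+ i * ('C(n, i))%:R * (- (i.+1%:R)) ^+ m.

Lemma E0m m : E 0 m = (m == 0)%:R.
Proof. by rewrite /E big_ord1 /= expr0 mul1r mul1r oppr0 expr0n. Qed.

Lemma En0 n : (0 < n)%N -> E n 0 = 0.
Proof.
move=> n0; rewrite /E.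
transitivity ((1 - 1 : R) ^+ n); last by rewrite subrr expr0n (gtn_eqF n0).
by rewrite exprBn; apply: eq_bigr => i _; rewrite !expr1n !mulr1 mulr_natr.
Qed.

Lemma Eext n m : E n m =
  \sum_(j < n.+2) (-1) ^+ j * ('C(n, j))%:R * (- (j%:R)) ^+ m.
Proof. by rewrite [RHS]big_ord_recr /= bin_small // mulr0 mul0r addr0. Qed.

Lemma ES n m : E n.+1 m = E n m - P n m.
Proof.
rewrite (Eext n m) /E /P big_ord_recl /=.
under eq_bigr => i _ do rewrite bump0 binS natrD mulrDr mulrDl exprS mulN1r !mulNr.
rewrite big_split /= addrA -sumrN; congr (_ + _).
rewrite [RHS]big_ord_recl /= !bin0; congr (_ + _).
by apply: eq_bigr => i _; rewrite bump0 exprS mulN1r !mulNr.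
Qed.

Lemma EderP n m : E n.+1 m.+1 = (n.+1)%:R * P n m.
Proof.
rewrite /E /P big_ord_recl /= oppr0 expr0n /= mulr0 add0r mulr_sumr.
apply: eq_bigr => i _; rewrite bump0.
have := mul_bin_diag n.+1 i => /= /(congr1 (fun x => x%:R : R)).
rewrite !natrM => h.
set X := (1 *- i.+1) ^+ m; set c0 := 'C(n, i)%:R; set c1 := 'C(n.+1, i.+1)%:R.
rewrite !exprS.
transitivity ((-1) ^+ i * (i.+1%:R * c1) * X); first by rewrite /X; ring.
by rewrite -h; ring.
Qed.

Lemma Eder n m : E n.+1 m.+1 = (n.+1)%:R * (E n m - E n.+1 m).
Proof. by rewrite EderP ES opprB addrCA subrr addr0. Qed.

Lemma PsumE n m : \sum_(l < m.+1) ('C(m, l))%:R * P n l = E n m.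
Proof.
rewrite /P /E.
under eq_bigr do rewrite mulr_sumr.
rewrite exchange_big /=; apply: eq_bigr => i _.
rewrite -[in RHS](_ : (- (i.+1%:R) + 1 : R) = - (i%:R)); last first.
  by rewrite -addn1 natrD opprD subrK.
rewrite exprD1n mulr_sumr; apply: eq_bigr => l _.
by rewrite mulrnAr mulr_natl mulrnAr.
Qed.

Lemma Eprod n m : \sum_(l < m) ('C(m, l))%:R * (E n l - E n.+1 l) = E n.+1 m.
Proof.
under eq_bigr do rewrite ES opprB addrCA subrr addr0.
by rewrite ES -(PsumE n m) big_ord_recr /= binn mul1r addrK.
Qed.

Lemma Evan m n : (m < n)%N -> E n m = 0.
Proof.
elim: m n => [|m IH] [|n] //= mn; first exact: En0.
by rewrite Eder !IH ?subrr ?mulr0 // ltnW.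
Qed.


Lemma tele (f : nat -> R) p : \sum_(n < p) (f n - f n.+1) = f 0%N - f p.
Proof.
elim: p => [|p IH]; first by rewrite big_ord0 subrr.
by rewrite big_ord_recr /= IH addrA subrK.
Qed.

Definition F k := \sum_(n < k.+1) ((n.+1)%:R ^+ 2)^-1 * E n.+1 k.+1.

Lemma FE k : F k = \sum_(n < k.+1) ((n.+1)%:R ^+ 2)^-1 * E n.+1 k.+1.
Proof. by []. Qed.

Lemma Falt k p : (k <= p)%N ->
  F k = \sum_(n < p.+1) ((n.+1)%:R)^-1 * (E n k - E n.+1 k).
Proof.
move=> kp; rewrite FE (big_ord_widen p.+1 (fun n => ((n.+1)%:R ^+ 2)^-1 * E n.+1 k.+1)) // big_mkcond.
apply: eq_bigr => n _; case: ifP => nk.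
  rewrite Eder mulrA; congr (_ * _).
  by rewrite expr2 invfM -mulrA mulVf ?mulr1 // pnatr_eq0.
have kn : (k < n)%N by rewrite ltnNge -ltnS nk.
by rewrite (@Evan k n kn) (@Evan k n.+1 (ltnW kn)) subrr mulr0.
Qed.

Lemma Frec p : \sum_(l < p.+1) ('C(p.+1, l))%:R * F l = (p == 0)%:R.
Proof.
under eq_bigr => l _ do rewrite (@Falt l p (ltn_ord l)) mulr_sumr.
rewrite exchange_big /=.
under eq_bigr => n _.
  under eq_bigr => l _ do rewrite mulrCA.
  rewrite -mulr_sumr Eprod Eder mulrA mulVf ?mul1r ?pnatr_eq0 //.
over.
by rewrite /= (tele (fun n => E n p)) E0m Evan // subr0.
Qed.

End PartA.

Lemma rec_unique (R : numFieldType) (b c : nat -> R) :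
  (forall p, \sum_(l < p.+1) ('C(p.+1, l))%:R * b l = (p == 0)%:R) ->
  (forall p, \sum_(l < p.+1) ('C(p.+1, l))%:R * c l = (p == 0)%:R) ->
  forall k, b k = c k.
Proof.
move=> hb hc; elim/ltn_ind => k IH.
have := hb k; rewrite -(hc k) !big_ord_recr /= binSn.
rewrite (eq_bigr (fun l : 'I_k => ('C(k.+1, l))%:R * c l)); last first.
  by move=> l _; rewrite IH.
by move/addrI/mulfI; apply; rewrite pnatr_eq0.
Qed.

Section PartB.
Variable R : realType.

Lemma geo_tail (q : R) a b : 0 <= q -> q <= 2^-1 -> (a <= b)%N ->
  \sum_(a <= k < b) q ^+ k <= 2 * q ^+ a - 2 * q ^+ b.
Proof.
move=> q0 q1; elim: b => [|b IH].
  by rewrite leqn0 => /eqP ->; rewrite big_geq // subrr.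
rewrite leq_eqVlt => /orP [/eqP ->|]; first by rewrite big_geq // subrr.
rewrite ltnS => ab; rewrite big_nat_recr //=.
have Q0 : 0 <= q ^+ b by rewrite exprn_ge0.
have := IH ab; rewrite exprSr.
have := ler_wpM2l Q0 q1; lra.
Qed.

Lemma small_zero (x C : R) : 0 <= C ->
  (forall s, 0 < s -> s <= 2^-1 -> `|x| <= C * s) -> x = 0.
Proof.
move=> C0 h; apply/normr0_eq0/eqP; rewrite eq_le normr_ge0 andbT.
rewrite leNgt; apply/negP => y0.
have D0 : 0 < 2 * C + 2 + 2 * `|x| by lra.
have := h (`|x| / (2 * C + 2 + 2 * `|x|)).
rewrite divr_gt0 // ler_pdivrMr // mulrA ler_pdivlMr //.
have H2 : `|x| <= 2^-1 * (2 * C + 2 + 2 * `|x|) by lra.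
by move/(_ isT H2); nra.
Qed.

Lemma lim_bound (u : nat -> R) c B N0 : u @ \oo --> 0 ->
  (forall N, (N0 <= N)%N -> `|u N - c| <= B) -> `|c| <= B.
Proof.
move=> hu hB.
have h : (fun N => `|u N - c|) @ \oo --> `|0 - c|.
  by apply: cvg_norm; apply: cvgB => //; exact: cvg_cst.
rewrite -normrN -[- c]add0r; apply: (cvgr_to_le h).
by exists N0 => // n /= /hB.
Qed.

Lemma cvg0_bounded (u : nat -> R) : u @ \oo --> 0 ->
  exists M, 0 <= M /\ forall n, `|u n| <= M.
Proof.
move=> hu; have [N0 _ hN] := cvgr0_norm_le _ hu _ (ltr01 : (0:R) < 1).
exists (1 + \sum_(i < N0) `|u i|); split.
  by rewrite addr_ge0 // sumr_ge0.
move=> n; case: (leqP N0 n) => nN.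
  by rewrite (le_trans (hN n nN)) // lerDl sumr_ge0.
rewrite (bigD1 (Ordinal nN)) //= addrCA lerDl addr_ge0 // sumr_ge0 //.
Qed.


Lemma uniq0 (e : nat -> R) M : 0 <= M -> (forall k, `|e k| <= M * 2 ^+ k) ->
  (forall s, 0 < s -> s <= 2^-1 ->
     (fun N => \sum_(0 <= k < N) e k * (s ^+ 2) ^+ k) @ \oo --> 0) ->
  forall k, e k = 0.
Proof.
move=> M0 he hs; elim/ltn_ind => n IH.
have C0 : 0 <= 4 * M * 2 ^+ n by rewrite mulr_ge0 ?exprn_ge0 // mulr_ge0.
apply: (@small_zero _ _ C0) => s s0 s1.
have t0 : 0 < s ^+ 2 by rewrite exprn_gt0.
have ts : s ^+ 2 <= s by rewrite expr2; nra.
have q1 : 2 * s ^+ 2 <= 2^-1 by rewrite expr2; nra.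
have q0 : 0 <= 2 * s ^+ 2 by rewrite mulr_ge0 // ltW.
move: (hs s s0 s1) t0 ts q1 q0; move: (s ^+ 2) => t hst t0 ts q1 q0.
have key : `|e n * t ^+ n| <= 2 * M * (2 * t) ^+ n.+1.
  apply: (@lim_bound _ _ _ n.+1 hst) => N nN.
  rewrite (@big_cat_nat _ _ _ n 0 N xpredT (fun k => e k * t ^+ k)) //; last by rewrite ltnW.
  rewrite big1_seq ?add0r; last first.
    by move=> k; rewrite mem_index_iota => /andP [_ kn]; rewrite IH ?mul0r.
  rewrite big_ltn //= add0r addrC addrK.
  apply: le_trans (ler_norm_sum _ _ _) _.
  apply: (@le_trans _ _ (\sum_(n.+1 <= k < N) M * (2 * t) ^+ k)).
    apply: ler_sum => k _; rewrite normrM normrX (ger0_norm (ltW t0)) [(2 * t) ^+ k]exprMn mulrA.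
    by apply: ler_wpM2r; [rewrite exprn_ge0 // ltW | exact: he].
  rewrite -mulr_sumr [2 * M]mulrC -mulrA; apply: ler_wpM2l => //.
  apply: (le_trans (geo_tail _ _ _ q0 q1 nN)).
  by rewrite lerBlDr lerDl mulr_ge0 // exprn_ge0.
move: key; rewrite normrM normrX (ger0_norm (ltW t0)) exprMn (exprS 2 n) (exprS t n).
have tn : 0 < t ^+ n by rewrite exprn_gt0.
move=> key.
have : `|e n| * t ^+ n <= (4 * M * 2 ^+ n * t) * t ^+ n.
  apply: (le_trans key); rewrite le_eqVlt; apply/orP; left; apply/eqP.
  set A := 2 ^+ n; set B := t ^+ n; ring.
rewrite ler_pM2r // => h; apply: (le_trans h).
by apply: ler_wpM2l.
Qed.


Lemma tri (x y : nat -> R) N :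
  \sum_(0 <= n < N) \sum_(0 <= j < n.+1) x j * y (n - j)%N =
  \sum_(0 <= j < N) \sum_(0 <= i < N - j) x j * y i.
Proof.
elim: N => [|N IH]; first by rewrite !big_geq.
rewrite big_nat_recr //= IH [RHS]big_nat_recr //= subSnn big_nat1.
rewrite (@big_nat_recr _ _ _ N 0 (fun j => x j * y (N - j)%N)) //= subnn addrA; congr (_ + _).
rewrite -big_split /=; apply: eq_big_nat => j /andP [_ jN].
by rewrite subSn ?(ltnW jN) // big_nat_recr.
Qed.


Lemma diffC (x y : nat -> R) N :
  (\sum_(0 <= j < N) x j) * (\sum_(0 <= i < N) y i) -
  \sum_(0 <= n < N) \sum_(0 <= j < n.+1) x j * y (n - j)%N =
  \sum_(0 <= j < N) \sum_(N - j <= i < N) x j * y i.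
Proof.
rewrite tri big_distrl /= -sumrB; apply: eq_big_nat => j /andP [_ jN].
rewrite mulr_sumr (@big_cat_nat _ _ _ (N - j) 0 N xpredT (fun i => x j * y i)) //=.
  by rewrite addrC addrK.
exact: leq_subr.
Qed.

Lemma bndC (x y : nat -> R) s M N : 0 < s -> s <= 2^-1 -> 0 <= M ->
  (forall j, `|x j| <= M * (s ^+ 2) ^+ j) -> (forall i, `|y i| <= M * (s ^+ 2) ^+ i) ->
  `|\sum_(0 <= j < N) \sum_(N - j <= i < N) x j * y i| <= 4 * M ^+ 2 * s ^+ N.
Proof.
move=> s0 s1 M0 hx hy.
have s0' : 0 <= s by rewrite ltW.
have s1' : s <= 1 by apply: (le_trans s1); rewrite invf_le1 // ler1n.
apply: (le_trans (ler_norm_sum _ _ _)).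
apply: (@le_trans _ _ (\sum_(0 <= j < N) (2 * M ^+ 2 * s ^+ N) * s ^+ j)).
  apply: ler_sum_nat => j /andP [_ jN].
  apply: (le_trans (ler_norm_sum _ _ _)).
  apply: (@le_trans _ _ (\sum_(N - j <= i < N) (M ^+ 2 * s ^+ N * s ^+ j) * s ^+ i)).
    apply: ler_sum_nat => i /andP [ji iN].
    rewrite normrM; apply: (le_trans (ler_pM _ _ (hx j) (hy i))) => //.
    rewrite mulrACA -expr2 -!mulrA; do 2 (apply: ler_wpM2l => //).
    rewrite -!exprM -!exprD; apply: ler_wiXn2l => //.
    move: ji jN; lia.
  rewrite -mulr_sumr.
  rewrite [X in _ <= X](_ : _ = M ^+ 2 * s ^+ N * s ^+ j * 2); last first.
    by set a := s ^+ N; set b := s ^+ j; ring.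
  apply: ler_wpM2l; first by rewrite !mulr_ge0 ?exprn_ge0.
  apply: (le_trans (geo_tail _ _ _ s0' s1 (leq_subr _ _))).
  rewrite lerBlDr ler_wpDr ?mulr_ge0 ?exprn_ge0 //.
  by rewrite -[X in _ <= X]mulr1 ler_wpM2l // exprn_ile1.
rewrite -mulr_sumr.
rewrite [X in _ <= X](_ : _ = 2 * M ^+ 2 * s ^+ N * 2); last first.
  by set a := s ^+ N; ring.
apply: ler_wpM2l; first by rewrite !mulr_ge0 ?exprn_ge0.
apply: (le_trans (geo_tail _ _ _ s0' s1 (leq0n N))).
by rewrite expr0 mulr1 lerBlDr lerDl mulr_ge0 ?exprn_ge0.
Qed.


Lemma cauchy (x y : nat -> R) (X Y s M : R) : 0 < s -> s <= 2^-1 -> 0 <= M ->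
  (forall j, `|x j| <= M * (s ^+ 2) ^+ j) -> (forall i, `|y i| <= M * (s ^+ 2) ^+ i) ->
  (fun N => \sum_(0 <= j < N) x j) @ \oo --> X ->
  (fun N => \sum_(0 <= i < N) y i) @ \oo --> Y ->
  (fun N => \sum_(0 <= n < N) \sum_(0 <= j < n.+1) x j * y (n - j)%N) @ \oo --> X * Y.
Proof.
move=> s0 s1 M0 hx hy cx cy.
set D := fun N => \sum_(0 <= j < N) \sum_(N - j <= i < N) x j * y i.
have -> : (fun N => \sum_(0 <= n < N) \sum_(0 <= j < n.+1) x j * y (n - j)%N) =
  (fun N => (\sum_(0 <= j < N) x j) * (\sum_(0 <= i < N) y i) - D N).
  by apply: funext => N; rewrite /D -diffC opprB addrC subrK.
rewrite -[X * Y]subr0; apply: cvgB; first exact: cvgM.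
apply/norm_cvg0P.
have s1' : `|s| < 1.
  by rewrite ger0_norm ?ltW // (le_lt_trans s1) // invf_lt1 // ltr1n.
have hB : (fun N => 4 * M ^+ 2 * s ^+ N) @ \oo --> 0.
  rewrite -(mulr0 (4 * M ^+ 2)); apply: cvgMl_tmp; exact: cvg_expr.
apply: (squeeze_cvgr _ (cvg_cst 0) hB).
by near=> N; rewrite normr_ge0 /= bndC.
Unshelve. all: by end_near.
Qed.

End PartB.

Lemma recb (R : realType) (b : nat -> R) : bernoulli_gf b ->
  forall p, \sum_(l < p.+1) ('C(p.+1, l))%:R * b l = (p == 0)%:R.
Proof.
move=> hb.
pose a j := b j / (j`!)%:R.
pose d n := \sum_(0 <= j < n.+1) a j / (((n - j).+1)`!)%:R.
have [M [M0 hM]] : exists M : R, 0 <= M /\ forall j, `|a j| <= M.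
  have h1 : 0 < `|1 : R| < 2 * pi.
    by rewrite normr1 ltr01 /=; have := pi_ge2 R; lra.
  have hc : cvgn (series (fun k => b k / (k`!)%:R * 1 ^+ k)) := cvgP _ (hb 1 h1).
  have [M [M0 hM]] := @cvg0_bounded R _ (cvg_series_cvg_0 hc).
  by exists M; split => // j; have := hM j; rewrite expr1n mulr1.
have key : forall s : R, 0 < s -> s <= 2^-1 ->
  (fun N => \sum_(0 <= n < N) (s ^+ 2) ^+ n.+1 * d n) @ \oo --> s ^+ 2.
  move=> s s0 s1.
  have t0 : 0 < s ^+ 2 by rewrite exprn_gt0.
  have t1 : s ^+ 2 <= 1 by rewrite expr2; nra.
  have M1 : 0 <= M + 1 by lra.
  have hx : forall j, `|b j / (j`!)%:R * (s ^+ 2) ^+ j| <= (M + 1) * (s ^+ 2) ^+ j.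
    move=> j; rewrite normrM normrX (ger0_norm (ltW t0)).
    apply: ler_wpM2r; first by rewrite exprn_ge0 // ltW.
    by apply: (le_trans (hM j)); lra.
  have hy : forall i, `|(s ^+ 2) ^+ i.+1 / (i.+1`!)%:R| <= (M + 1) * (s ^+ 2) ^+ i.
    move=> i; rewrite ger0_norm; last by rewrite divr_ge0 // exprn_ge0 // ltW.
    have f1 : 1 <= (i.+1`!)%:R :> R by rewrite ler1n fact_gt0.
    have tp : 0 <= (s ^+ 2) ^+ i by rewrite exprn_ge0 // ltW.
    rewrite exprS ler_pdivrMr; last by rewrite (lt_le_trans ltr01).
    have : s ^+ 2 * (s ^+ 2) ^+ i <= (s ^+ 2) ^+ i.
      by rewrite -[X in _ <= X]mul1r ler_wpM2r.
    move=> h; apply: (le_trans h).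
    rewrite -[X in X <= _]mul1r -mulrA ler_pM //; first by lra.
    by rewrite -[X in X <= _]mulr1 ler_pM.
  have h2 : 0 < `|s ^+ 2| < 2 * pi.
    rewrite ger0_norm ?ltW // t0 /=; have := pi_ge2 R; lra.
  have cx := hb _ h2.
  have cy : (fun N => \sum_(0 <= i < N) (s ^+ 2) ^+ i.+1 / (i.+1`!)%:R) @ \oo
      --> expR (s ^+ 2) - 1.
    have e1 : series (exp_coeff (s ^+ 2)) @ \oo --> expR (s ^+ 2) :=
      is_cvg_series_exp_coeff _.
    rewrite -cvg_shiftS in e1.
    have e2 := cvgB e1 (cvg_cst (1 : R)).
    suff -> : (fun N => \sum_(0 <= i < N) (s ^+ 2) ^+ i.+1 / (i.+1`!)%:R) =
      (fun N => series (exp_coeff (s ^+ 2)) N.+1 - 1) by exact: e2.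
    apply: funext => N; rewrite /series /exp_coeff /= big_nat_recl //=.
    by rewrite expr0 fact0 divr1 addrAC subrr add0r.
  have := @cauchy R _ _ _ _ s (M + 1) s0 s1 M1 hx hy cx cy.
  rewrite divfK; last first.
    by rewrite subr_eq0 gt_eqF // pexpR_gt1.
  move: t0 t1; move: (s ^+ 2) => t t0 t1.
  move=> h.
  suff EQ : (fun N => \sum_(0 <= n < N) \sum_(0 <= j < n.+1)
      (b j / (j`!)%:R * t ^+ j) * (t ^+ (n - j).+1 / ((n - j).+1`!)%:R)) =1
    (fun N => \sum_(0 <= n < N) t ^+ n.+1 * d n) by rewrite -(eq_cvg _ _ EQ).
  move=> N; apply: eq_bigr => n _.
  rewrite /d mulr_sumr; apply: eq_big_nat => j /andP [_ jn].
  rewrite -[in RHS](subnKC (jn : (j <= n)%N)) -addnS exprD /a addKn.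
  set F1 := (j`!%:R)^-1; set F2 := (((n - j).+1)`!%:R)^-1.
  set T1 := t ^+ j; set T2 := t ^+ (n - j).+1.
  set B := b j; ring.
pose e n := d n - (n == 0)%:R.
have hd : forall n, `|d n| <= M * 2 ^+ n.
  move=> n; rewrite /d; apply: (le_trans (ler_norm_sum _ _ _)).
  apply: (@le_trans _ _ (\sum_(0 <= j < n.+1) M)).
    apply: ler_sum_nat => j _; rewrite normrM [`|_^-1|]ger0_norm ?invr_ge0 ?ler0n //.
    have f1 : 1 <= (((n - j).+1)`!)%:R :> R by rewrite ler1n fact_gt0.
    rewrite -[X in _ <= X]mulr1 ler_pM ?invr_ge0 ?ler0n //.
    by rewrite invf_le1 // (lt_le_trans ltr01).
  rewrite sumr_const_nat subn0 -[M *+ _]mulr_natr; apply: ler_wpM2l => //.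
  by rewrite -natrX ler_nat ltn_expl.
have he : forall k, e k = 0.
  apply: (@uniq0 R e (M + 1)); first by lra.
    move=> k; rewrite /e; apply: (le_trans (ler_normB _ _)).
    rewrite mulrDl mul1r; apply: lerD => //.
    rewrite ger0_norm ?ler0n //; case: (k == 0%N) => /=; last by rewrite exprn_ge0.
    by rewrite exprn_ege1 // ler1n.
  move=> s s0 s1.
  have t0 : 0 < s ^+ 2 by rewrite exprn_gt0.
  move: (key s s0 s1) t0; move: (s ^+ 2) => t hk t0.
  rewrite -cvg_shiftS /=; rewrite -cvg_shiftS /= in hk.
  have h3 := cvgB (cvgMr_tmp (b := t^-1) hk) (cvg_cst (1 : R)).
  rewrite mulfV ?gt_eqF // subrr in h3.
  suff EQ : (fun N => \sum_(0 <= k < N.+1) e k * t ^+ k) =1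
    (fun N => (\sum_(0 <= n < N.+1) t ^+ n.+1 * d n) / t - 1).
    by rewrite (eq_cvg _ _ EQ); apply: h3; apply: filter_class.
  move=> N; rewrite /e.
  under eq_bigr do rewrite mulrBl.
  rewrite sumrB; congr (_ - _).
    rewrite mulr_suml; apply: eq_bigr => k _.
    rewrite exprS; set T := t ^+ k; set D := d k; field; exact: lt0r_neq0.
  rewrite big_nat_recl //= expr0 mulr1 big1 ?addr0 //.
  by move=> i _; rewrite mul0r.
move=> p.
have := he p; rewrite /e => /eqP; rewrite subr_eq0 => /eqP hdp.
transitivity ((p.+1)`!%:R * d p); last first.
  by rewrite hdp; case: p {hdp} => [|p] /=; rewrite ?mulr1 ?mulr0.
rewrite /d mulr_sumr -(big_mkord xpredT (fun l => ('C(p.+1, l))%:R * b l)).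
apply: eq_big_nat => l /andP [_ lp].
have hb1 := bin_fact (ltnW lp : (l <= p.+1)%N).
rewrite subSn // in hb1.
rewrite -hb1 natrM (natrM R l`! (((p - l).+1)`!)) /a.
have l0 : (l`!%:R : R) != 0 by rewrite pnatr_eq0 -lt0n fact_gt0.
have l1 : (((p - l).+1)`!%:R : R) != 0 by rewrite pnatr_eq0 -lt0n fact_gt0.
move: l0 l1; set A := (l`!%:R : R); set B := (((p - l).+1)`!%:R : R) => l0 l1.
clearbody A B; set C := 'C(p.+1, l)%:R; clearbody C.
by field; rewrite l0 l1.
Qed.

Lemma F_stmt (R : realType) k :
  (-1) ^+ k.+1 * \sum_(1 <= n < k.+2) ((n%:R) ^+ 2)^-1 * Delta R n k.+1 = F R k.
Proof.
rewrite FE big_add1 /= -(big_mkord xpredT (fun n => ((n.+1)%:R ^+ 2)^-1 * E R n.+1 k.+1)).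
rewrite mulr_sumr; apply: eq_big_nat => n _.
rewrite mulrCA; congr (_ * _).
rewrite /Delta /E big_add1 /= mulr_sumr big_ord_recl /= oppr0 expr0n /= mulr0 add0r.
under [RHS]eq_bigr do rewrite bump0.
rewrite -(big_mkord xpredT (fun j => (-1) ^+ j.+1 * ('C(n.+1, j.+1))%:R * (- (j.+1%:R)) ^+ k.+1)).
apply: eq_big_nat => j _.
rewrite (exprNn (j.+1%:R : R)); set P := (-1) ^+ k.+1; set Q := (-1) ^+ j.+1; set X := (j.+1%:R) ^+ k.+1.
by set C := ('C(n.+1, j.+1))%:R; ring.
Qed.

Theorem mainTheorem2 (R : realType) (b : nat -> R) (hb : bernoulli_gf b)
  (k : nat) :
  b k = (-1) ^+ k.+1 *
        \sum_(1 <= n < k.+2) ((n%:R) ^+ 2)^-1 * Delta R n k.+1.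
Proof.
rewrite F_stmt; exact: (@rec_unique R b (F R) (@recb R b hb) (@Frec R) k).
Qed.
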